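(* A sticky tree is determined by its underlying plane tree together with its certificate-counting function: if $(T,\ell)$ and $(T,\ell')$ are sticky trees with the same underlying plane tree $T$ and the same certificate-counting function, then $\ell=\ell'$.
   Context: Sticky trees: a plane tree is a rooted tree in which the children of every node are linearly ordered (left to right). The root has depth $0$, a child of a node of depth $d$ has depth $d+1$. The prefix order is: the root, followed by the prefix order of the subtree of its leftmost child, then of its second child, and so on. $S_u$ denotes the subtree rooted at $u$. A sticky tree is a plane tree $S$ with node set $V$ and a labeling $\ell:V\to\mathbb{N}$ such that: (1) every node $u$ of depth $d$ has $0\le\ell(u)\le d$; (2) every node $u$ of depth $d>0$ has some $v\in S_u$ (possibly $v=u$) with $\ell(v)<d$; (3) for every node $u$ of depth $d$, if some $v\in S_u$ has $\ell(v)=d$, then every node of $S_u$ (including $u$) preceding $v$ in prefix order has label at least $d$. The certificate of a non-root node $u$ of depth $d$ is the first node, in prefix order, of $S_u$ whose label is $<d$. The certificate-counting function $c:V\to\mathbb{N}$ assigns to each node $w$ the number of non-root nodes whose certificate is $w$. *)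

(* Defs.v *)
From mathcomp Require Import all_boot.
Set Implicit Arguments. Unset Strict Implicit. Unset Printing Implicit Defensive.

Inductive ptree := Node of seq ptree.

(* Nodes are addressed by their path from the root: the list of child
   indices (0 = leftmost child).  The root is [::]; the depth of a node u
   is size u. *)
Definition addr := seq nat.

(* All nodes of a plane tree, listed in prefix order: the root, then the
   prefix order of the subtree of the leftmost child, then the second, ... *)
Fixpoint nodes (t : ptree) : seq addr :=
  match t with
  | Node ts =>
      [::] :: (fix aux (i : nat) (ts : seq ptree) : seq addr :=
                 match ts with
                 | [::] => [::]
                 | t' :: ts' => map (cons i) (nodes t') ++ aux i.+1 ts'
                 end) 0 ts
  end.

Definition in_sub (u v : addr) : bool := prefix u v.

Definition precedes (t : ptree) (v w : addr) : bool :=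
  index v (nodes t) < index w (nodes t).

Definition depth (u : addr) : nat := size u.

Definition sticky (t : ptree) (l : addr -> nat) : Prop :=
  (forall u, u \in nodes t -> l u <= depth u) /\
  (forall u, u \in nodes t -> 0 < depth u ->
     exists v, [/\ v \in nodes t, in_sub u v & l v < depth u]) /\
  (* (3) *)
  (forall u v, u \in nodes t -> v \in nodes t -> in_sub u v ->
     l v = depth u ->
     forall w, w \in nodes t -> in_sub u w -> precedes t w v ->
       depth u <= l w).

Definition certificate (t : ptree) (l : addr -> nat) (u : addr) : addr :=
  head [::] [seq v <- nodes t | in_sub u v && (l v < depth u)].

Definition cert_count (t : ptree) (l : addr -> nat) (w : addr) : nat :=
  count (fun u => (0 < depth u) && (certificate t l u == w)) (nodes t).

(* Main.v *)
Require Import Defs.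
From mathcomp Require Import all_boot.
From mathcomp Require Import zify.
Set Implicit Arguments. Unset Strict Implicit. Unset Printing Implicit Defensive.

Fixpoint myaux (i : nat) (ts : seq ptree) : seq addr :=
  match ts with
  | [::] => [::]
  | t' :: ts' => map (cons i) (nodes t') ++ myaux i.+1 ts'
  end.

Lemma nodesE ts : nodes (Node ts) = [::] :: myaux 0 ts.
Proof. by []. Qed.

Lemma mem_map_cons (i c : nat) (w : addr) (s : seq addr) :
  (c :: w \in map (cons i) s) = (c == i) && (w \in s).
Proof.
apply/mapP/andP.
  by case=> x xs [-> ->]; split.
by case=> /eqP -> ws; exists w.
Qed.

Lemma mem_aux i ts c w :
  (c :: w \in myaux i ts) <->
  [/\ i <= c, c - i < size ts & w \in nodes (nth (Node [::]) ts (c - i))].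
Proof.
elim: ts i => [|t' ts IH] i /=.
  by split=> // -[].
rewrite mem_cat mem_map_cons; split.
  case/orP.
    by case/andP=> /eqP -> ws; rewrite subnn.
  move/IH=> [h1 h2 h3]; split; first lia.
    lia.
  have -> : c - i = (c - i.+1).+1 by lia.
  by [].
move=> [h1 h2 h3]; apply/orP.
case: (eqVneq c i) => [ci|cni]; first by subst c; left; move: h3; rewrite subnn /=.
right; apply/IH; split; first lia.
  lia.
have e : c - i = (c - i.+1).+1 by lia.
by move: h3; rewrite e.
Qed.

Lemma take_closed w t k : w \in nodes t -> take k w \in nodes t.
Proof.
elim: w t k => [|c w IH] [ts] k.
  by case: k.
case: k => [|k]; first by rewrite take0 nodesE mem_head.
rewrite nodesE /= !in_cons /= => /mem_aux [h1 h2 h3].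
apply/mem_aux; split=> //.
exact: IH.
Qed.

Lemma head_filter_eq (s : seq addr) (P : pred addr) w :
  w != [::] -> w \in s ->
  (head [::] (filter P s) = w) <->
  (P w /\ forall x, x \in s -> index x s < index w s -> ~~ P x).
Proof.
move=> wne; elim: s => [|y s IH] //= ws.
have hw : forall s', head [::] (filter P s') = w -> P w.
  move=> s' h.
  have : w \in filter P s'.
    case E: (filter P s') h => [|z z'] /=.
      by move=> h; rewrite -h eqxx in wne.
    by move=> ->; rewrite mem_head.
  by rewrite mem_filter => /andP[].
case: (eqVneq y w) => [yw|ynw].
  subst y; split.
    move=> h; split; first by apply: (hw (w :: s)); rewrite /= h.
    by [].
  by case=> Pw _; rewrite Pw.
have ws' : w \in s by move: ws; rewrite in_cons eq_sym (negbTE ynw).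
case Py: (P y).
  split; first by move=> /= h; rewrite h eqxx in ynw.
  case=> _ h; have := h y (mem_head _ _).
  by rewrite /= eqxx Py => /(_ isT).
rewrite (IH ws'); split.
  case=> Pw h; split=> // x; rewrite in_cons => /orP [/eqP ->|xs]; first by rewrite Py.
  case: (eqVneq y x) => [<-|ynx] /=; first by rewrite Py.
  by rewrite ltnS; apply: h.
case=> Pw h; split=> // x xs xlt.
case: (eqVneq y x) => [yx|ynx]; first by subst; rewrite Py.
apply: h; first by rewrite in_cons xs orbT.
by rewrite /= (negbTE ynx) ltnS.
Qed.

Lemma count_strict (s : seq addr) (P P' : pred addr) :
  (forall x, x \in s -> P' x -> P x) ->
  (exists2 x, x \in s & P x && ~~ P' x) ->
  count P' s < count P s.
Proof.
have weak : forall s', (forall x, x \in s' -> P' x -> P x) -> count P' s' <= count P s'.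
  elim=> //= y s' IH h.
  have := IH (fun x xs => h x (introT orP (or_intror xs))).
  have := h y (mem_head _ _).
  case: (P' y); case: (P y) => //=; try lia.

elim: s => [|y s IH] h [x xs hx] //=.
move: xs; rewrite in_cons => /orP [/eqP exy|xs].
  subst x; move: hx => /andP[-> /negbTE ->] /=.
  have := weak s (fun z zs => h z (introT orP (or_intror zs))); lia.
have := IH (fun z zs => h z (introT orP (or_intror zs))) (ex_intro2 _ _ x xs hx).
have := h y (mem_head _ _).
case: (P' y); case: (P y) => //=; try lia.

Qed.

Lemma key t l l' w : sticky t l' -> w \in nodes t ->
  (forall x, x \in nodes t -> index x (nodes t) < index w (nodes t) -> l x = l' x) ->
  cert_count t l w = cert_count t l' w -> l w < l' w -> False.
Proof.
move=> [H1 [_ H3]] Hw IH Hc Hlt.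
have hb : l' w <= size w := H1 w Hw.
have wne : w != [::] by case: w Hw hb Hlt {IH Hc} => //= _ ; lia.
set b := l' w in hb Hlt.
set u0 := take b w.
have Hu0 : u0 \in nodes t by apply: take_closed.
have su0 : size u0 = b by rewrite /u0 size_takel.
have pu0 : prefix u0 w by rewrite /u0 prefix_take.
have A : forall x, x \in nodes t -> prefix u0 x ->
    index x (nodes t) < index w (nodes t) -> b <= l' x.
  move=> x xs px prec.
  have := H3 u0 w Hu0 Hw pu0 _ x xs px prec.
  by rewrite /depth su0; apply.
move: Hc; rewrite /cert_count => Hc.
suff : count (fun u => (0 < depth u) && (certificate t l' u == w)) (nodes t) <
       count (fun u => (0 < depth u) && (certificate t l u == w)) (nodes t).
  by rewrite Hc ltnn.
apply: count_strict.
  move=> u us /andP[dpos /eqP ce]; rewrite dpos /=; apply/eqP.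
  move: ce; rewrite /certificate (@head_filter_eq _ _ _ wne Hw) => -[/andP [pw lw] h].
  apply/(@head_filter_eq _ _ _ wne Hw); split.
    rewrite pw /=; move: lw; rewrite /depth; lia.
  move=> x xs xlt; rewrite (IH x xs xlt); exact: h.
exists u0 => //; apply/andP; split.
  rewrite /depth su0 /=; apply/andP; split; first lia.
  apply/eqP; rewrite /certificate (@head_filter_eq _ _ _ wne Hw); split.
    rewrite /in_sub pu0 /depth su0 /=; lia.
  move=> x xs xlt; rewrite /in_sub /depth su0 (IH x xs xlt).
  apply/negP => /andP [px lx]; have := A x xs px xlt; lia.
apply/negP => /andP [_ /eqP ce].
move: ce; rewrite /certificate (@head_filter_eq _ _ _ wne Hw) => -[/andP [_ lw] _].
move: lw; rewrite /depth su0; lia.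
Qed.

Theorem corollary4p4 (t : ptree) (l l' : addr -> nat) :
  sticky t l -> sticky t l' ->
  (forall w, w \in nodes t -> cert_count t l w = cert_count t l' w) ->
  forall u, u \in nodes t -> l u = l' u.
Proof.
move=> Sl Sl' Hc.
suff H : forall n w, w \in nodes t -> index w (nodes t) < n -> l w = l' w.
  by move=> u us; apply: (H (index u (nodes t)).+1).
elim=> [|n IHn] w ws //= wlt.
have IH : forall x, x \in nodes t -> index x (nodes t) < index w (nodes t) -> l x = l' x.
  move=> x xs xlt; apply: IHn => //; lia.
case: (ltngtP (l w) (l' w)) => // h.
  by case: (key Sl' ws IH (Hc w ws) h).
case: (key Sl ws (fun x xs xlt => esym (IH x xs xlt)) (esym (Hc w ws)) h).
Qed.
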